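(* Let $n\in\mathbb{N}$ and let $(X_1,\dots,X_n)$ be a random vector with joint distribution function $F_{(X_1,\dots,X_n)}$ and marginal distribution functions $F_i=F_{X_i}$, $i=1,\dots,n$. Let $C_F$ be a copula such that $F_{(X_1,\dots,X_n)}(x_1,\dots,x_n)=C_F(F_1(x_1),\dots,F_n(x_n))$ for all $(x_1,\dots,x_n)\in\mathbb{R}^n$. Let $(\alpha_1,\dots,\alpha_n)\in(0,1)^n$ satisfy $F_i^{\wedge}(\alpha_i)<F_i^{\vee}(\alpha_i)$ for all $i\in\{1,\dots,n\}$. Then \[C_F(\alpha_1,\dots,\alpha_n)=F_{(X_1,\dots,X_n)}\big(F_1^{\wedge}(\alpha_1),\dots,F_n^{\wedge}(\alpha_n)\big).\]
   Context: A copula is an $n$-variate distribution function on $[0,1]^n$ with uniform $U(0,1)$ marginals. For a univariate distribution function $G$ and $\alpha\in(0,1)$: $G^{\wedge}(\alpha)=\inf\{x:G(x)\ge\alpha\}$ (left $\alpha$-quantile) and $G^{\vee}(\alpha)=\inf\{x:G(x)>\alpha\}$ (right $\alpha$-quantile). *)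

(* Defs.v *)
From HB Require Import structures.
From mathcomp Require Import all_boot all_order all_algebra.
From mathcomp Require Import all_classical all_reals all_analysis.
Set Implicit Arguments. Unset Strict Implicit. Unset Printing Implicit Defensive.
Import Order.TTheory GRing.Theory Num.Theory.
Local Open Scope classical_set_scope.
Local Open Scope ring_scope.

Definition lquantile (R : realType) (G : R -> R) (a : R) : R :=
  inf [set x : R | a <= G x].

Definition rquantile (R : realType) (G : R -> R) (a : R) : R :=
  inf [set x : R | a < G x].

Definition jointdf (R : realType) d (T : measurableType d)
  (P : probability T R) n (X : 'I_n -> {RV P >-> R}) (x : 'I_n -> R) : R :=
  fine (P [set w | forall i, X i w <= x i]).

Definition margdf (R : realType) d (T : measurableType d)
  (P : probability T R) (Y : {RV P >-> R}) (t : R) : R :=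
  fine (P [set w | Y w <= t]).

Definition copula (R : realType) n (C : ('I_n -> R) -> R) : Prop :=
  exists (d : measure_display) (T : measurableType d) (P : probability T R)
         (U : 'I_n -> {RV P >-> R}),
    (forall i t, 0 <= t <= 1 -> margdf (U i) t = t) /\
    (forall u : 'I_n -> R, (forall i, 0 <= u i <= 1) -> C u = jointdf U u).

(* Main.v *)
Require Import Defs.
From HB Require Import structures.
From mathcomp Require Import all_boot all_order all_algebra.
From mathcomp Require Import all_classical all_reals all_analysis.
Import Order.TTheory GRing.Theory Num.Theory.
Import numFieldNormedType.Exports.
Local Open Scope classical_set_scope.
Local Open Scope ring_scope.

Lemma key (R : realType) (G : R -> R) (a : R) :
  {homo G : x y / x <= y} ->
  (forall q : R, G r @[r --> q^'+] --> G q) ->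
  G x @[x --> +oo] --> (1:R) -> G x @[x --> -oo] --> (0:R) -> 0 < a < 1 ->
  lquantile G a < rquantile G a -> G (lquantile G a) = a.
Proof.
move=> Gmono Grc Gy GNy /andP[a0 a1] qr.
have [M1 [_ HM1]] := cvgr_gt 1 Gy a a1.
have [M0 [_ HM0]] := cvgr_lt 0 GNy a a0.
set L := [set x | a <= G x].
have Lne : L (M1 + 1) by apply/ltW/HM1; rewrite ltrDl.
have Llb : lbound L (M0 - 1).
  move=> x /= Lx; rewrite leNgt; apply/negP => xM.
  have xM0 : x < M0 by rewrite (lt_le_trans xM) // lerBlDr lerDl.
  by have := HM0 x xM0; rewrite ltNge Lx.
have hasL : has_inf L by split; [exists (M1 + 1) | exists (M0 - 1)].
set q := lquantile G a.
have qE : q = inf L by [].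
have Gq1 : a <= G q.
  rewrite leNgt; apply/negP => Gqa.
  have := cvgr_lt _ (Grc q) a Gqa.
  case=> e /= e0 He.
  have [x Lx xe] := inf_adherent e0 hasL.
  rewrite -qE in xe.
  have qx : q <= x by rewrite qE; apply: ge_inf Lx; exists (M0 - 1).
  move: qx; rewrite le_eqVlt => /orP[/eqP qx|qx].
    by move: Lx; rewrite /L /= -qx leNgt Gqa.
  move: Lx; rewrite /L /= => Lx.
  have := He x; rewrite [G x < a]ltNge Lx /= => H.
  suff : false by []; apply: (fun b => H b qx).
  rewrite /ball_ /= distrC ger0_norm ?subr_ge0 ?(ltW qx) //.
  by rewrite ltrBlDr addrC.
set r := rquantile G a.
pose m := (q + r) / 2.
have qm : q < m by rewrite /m midf_lt.
have mr : m < r by rewrite /m midf_lt.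
have Gx : G m <= a.
  rewrite leNgt; apply/negP => ax.
  have Slb : lbound [set y | a < G y] (M0 - 1) by move=> y /ltW; exact: Llb.
  have := ge_inf (ex_intro _ _ Slb) ax.
  by rewrite -/r leNgt mr.
apply/eqP; rewrite eq_le Gq1 andbT.
exact: le_trans (Gmono _ _ (ltW qm)) Gx.
Qed.

Lemma margdf_props (R : realType) (d : measure_display) (T : measurableType d)
  (P : probability T R) (Y : {RV P >-> R}) :
  [/\ {homo margdf Y : x y / x <= y},
   (forall q : R, margdf Y r @[r --> q^'+] --> margdf Y q),
   margdf Y x @[x --> +oo] --> (1:R) &
   margdf Y x @[x --> -oo] --> (0:R)].
Proof.
have E : margdf Y = fine \o cdf Y.
  apply/funext => t; rewrite /margdf /cdf /distribution /pushforward /=.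
  congr (fine (P _)); apply/seteqP; split => w /=; rewrite in_itv //=.
rewrite E; split.
- move=> x y xy /=; rewrite fine_le ?fin_num_measure //; exact: cdf_nondecreasing.
- move=> q; have := @cdf_right_continuous _ _ _ P Y q.
  rewrite -[cdf Y q]fineK ?fin_num_measure //; exact: fine_cvg.
- exact: fine_cvg (cvg_cdfy1 Y).
- exact: fine_cvg (cvg_cdfNy0 Y).
Qed.

Theorem mainTheorem10 (R : realType) (d : measure_display) (T : measurableType d)
  (P : probability T R) (n : nat) (X : 'I_n -> {RV P >-> R})
  (C : ('I_n -> R) -> R) :
  copula C ->
  (forall x : 'I_n -> R, jointdf X x = C (fun i => margdf (X i) (x i))) ->
  forall alpha : 'I_n -> R,
    (forall i, 0 < alpha i < 1) ->
    (forall i, lquantile (margdf (X i)) (alpha i) <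
               rquantile (margdf (X i)) (alpha i)) ->
    C alpha = jointdf X (fun i => lquantile (margdf (X i)) (alpha i)).
Proof.
move=> _ HJ alpha Ha Hq; rewrite HJ; congr C; apply/funext => i /=.
have [h1 h2 h3 h4] := margdf_props _ _ _ _ (X i).
by rewrite key.
Qed.
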